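(* Let $w(x,y)=x^{a_1}y^{b_1}\cdots x^{a_k}y^{b_k}\in F_2$ with $k\ge1$ and all integers $a_i\neq0$, $b_i\neq0$. If all $b_i$ are negative, then either the word map $w:\mathrm{SL}(2,\mathbb{C})^2\to\mathrm{SL}(2,\mathbb{C})$ is surjective, or $w=v^2$ for some word $v\neq\mathrm{id}$.
   Context: The word map sends $(X,Y)$ to $X^{a_1}Y^{b_1}\cdots X^{a_k}Y^{b_k}$. *)

(* Defs.v *)
From mathcomp Require Import all_boot all_algebra.
From mathcomp Require Import complex.
From mathcomp Require Import reals Rstruct.
Set Implicit Arguments. Unset Strict Implicit. Unset Printing Implicit Defensive.
Import GRing.Theory Num.Theory.
Local Open Scope ring_scope.

Definition CC : Type := complex Rdefinitions.R.

Definition SL2 (M : 'M[CC]_2) : Prop := \det M = 1.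

Definition word_map (k : nat) (a b : 'I_k -> int) (X Y : 'M[CC]_2) : 'M[CC]_2 :=
  \prod_(i < k) (X ^ a i * Y ^ b i).

(* The free group F_2 on x, y, as words in letters.  A letter is a pair
   (is_y, is_inverse): (false,false) = x, (false,true) = x^-1,
   (true,false) = y, (true,true) = y^-1. *)
Definition letter := (bool * bool)%type.

Definition push (l : letter) (s : seq letter) : seq letter :=
  match s with
  | l' :: s' => if (l'.1 == l.1) && (l'.2 != l.2) then s' else l :: s
  | [::] => [:: l]
  end.
Definition reduce (s : seq letter) : seq letter := foldr push [::] s.

Definition F2eq (s t : seq letter) : Prop := reduce s = reduce t.

Definition gen_pow (is_y : bool) (e : int) : seq letter :=
  nseq `|e|%N (is_y, e < 0).

Definition word_of (k : nat) (a b : 'I_k -> int) : seq letter :=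
  flatten [seq gen_pow false (a i) ++ gen_pow true (b i) | i <- enum 'I_k].

(* Main.v *)
Require Import Defs.
From mathcomp Require Import all_boot all_algebra.
From mathcomp Require Import complex.
From mathcomp Require Import reals Rstruct.
From mathcomp Require Import all_fingroup all_solvable all_field.
From mathcomp Require Import order ring zify intdiv.
From Stdlib Require Import Classical.
Set Implicit Arguments. Unset Strict Implicit. Unset Printing Implicit Defensive.
Import GRing.Theory Num.Theory.
Import Order.TTheory.
Local Open Scope ring_scope.

Definition WofR (R : unitRingType) (G : seq int) (X Y : R) : R := \prod_(g <- G) (X ^ g * Y ^ (-1)).

Lemma conj_powzR (R : unitRingType) (Q X : R) (z : int) : Q \is a GRing.unit ->
  X \is a GRing.unit -> (Q * X * Q^-1) ^ z = Q * X ^ z * Q^-1.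
Proof.
move=> uQ uX.
have hn : forall (X : R) n, (Q * X * Q^-1) ^+ n = Q * X ^+ n * Q^-1.
  move=> X' ; elim=> [|n IH]; first by rewrite !expr0 mulr1 divrr.
  by rewrite exprS IH !mulrA divrK // exprS !mulrA.
case: z => n; first by rewrite -!exprnP hn.
rewrite !NegzE -!exprz_inv -!exprnP.
have uA : Q * X * Q^-1 \is a GRing.unit by rewrite unitrMr ?unitrV // unitrMl.
have -> : (Q * X * Q^-1)^-1 = Q * X^-1 * Q^-1.
  apply: (mulrI uA); rewrite divrr //.
  by rewrite !mulrA divrK // mulrK // divrr.
by rewrite -hn.
Qed.

Lemma Wof_conjR (R : unitRingType) G (Q X Y : R) : Q \is a GRing.unit -> X \is a GRing.unit ->
  Y \is a GRing.unit -> WofR G (Q * X * Q^-1) (Q * Y * Q^-1) = Q * WofR G X Y * Q^-1.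
Proof.
move=> uQ uX uY; elim: G => [|g G IH].
  by rewrite /WofR !big_nil mulr1 divrr.
rewrite /WofR !big_cons -!/(WofR G _ _) IH !conj_powzR //.
by rewrite !mulrA !divrK.
Qed.

Lemma det2_ (R : comNzRingType) (M : 'M[R]_2) : True. Proof. by []. Qed.
Lemma det2 (R : comNzRingType) (M : 'M[R]_2) : \det M = M 0 0 * M 1 1 - M 0 1 * M 1 0.
Proof.
rewrite (expand_det_row _ 0) !big_ord_recl big_ord0 addr0 /cofactor !det_mx11 !mxE /=.
rewrite !expr0 expr1 mul1r mulN1r.
rewrite mulrN; congr (_ * M _ _ - _ * M _ _); (try congr (M _ _)); exact: val_inj.
Qed.

Definition T (a b : CC) : 'M[CC]_2 :=
  \matrix_(i, j) (if i == 0 :> nat then (if j == 0 :> nat then a else b)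
                  else (if j == 0 :> nat then 0 else a^-1)).

Lemma TM a b c d : T a b * T c d = T (a * c) (a * d + b / c).
Proof.
apply/matrixP => i j; rewrite -mulmxE !mxE !big_ord_recl big_ord0 !mxE /=.
case: i => [[|[|//]] ?]; case: j => [[|[|//]] ?] /=;
  rewrite ?mulr0 ?mul0r ?addr0 ?add0r ?invfM //.
Qed.

Lemma T10 : T 1 0 = 1.
Proof.
apply/matrixP => i j; rewrite !mxE /=.
case: i => [[|[|//]] ?]; case: j => [[|[|//]] ?] //=; by rewrite invr1.
Qed.

Lemma detT a b : a != 0 -> \det (T a b) = 1.
Proof.
move=> a0; rewrite det2 !mxE /= mulr0 subr0 divff //.
Qed.

Lemma T_unit a b : a != 0 -> T a b \is a GRing.unit.
Proof. by move=> a0; rewrite unitmxE detT // unitr1. Qed.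

Lemma TV a b : a != 0 -> (T a b)^-1 = T a^-1 (- b).
Proof.
move=> a0; apply: (mulrI (T_unit b a0)); rewrite divrr ?T_unit // TM.
by rewrite divff // invrK mulrN mulrC addNr T10.
Qed.

Lemma TXn a n : T a 0 ^+ n = T (a ^+ n) 0.
Proof.
elim: n => [|n IH]; first by rewrite expr0 T10.
by rewrite exprS IH TM mulr0 mul0r addr0 exprS.
Qed.

Lemma TXz a (z : int) : a != 0 -> T a 0 ^ z = T (a ^ z) 0.
Proof.
move=> a0; case: z => n.
  by rewrite -!exprnP TXn.
by rewrite !NegzE -!exprz_inv TV // oppr0 -!exprnP TXn.

Qed.


Definition Wof (G : seq int) (X Y : 'M[CC]_2) : 'M[CC]_2 :=
  \prod_(g <- G) (X ^ g * Y ^ (-1)).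

Definition Pf (r s : CC) (G : seq int) : CC :=
  foldr (fun g p => r ^ g * (1 + s^-1 * p)) 0 G.

Definition Uf (al mu : CC) (G : seq int) : CC :=
  foldr (fun g u => al ^ g * mu^-1 * u) 1 G.

Lemma Uf_neq0 al mu G : al != 0 -> mu != 0 -> Uf al mu G != 0.
Proof.
move=> a0 m0; elim: G => [|g G IH] /=; first exact: oner_neq0.
by rewrite !mulf_neq0 ?invr_eq0 ?expfz_neq0.
Qed.

Lemma WofT al mu y G : al != 0 -> mu != 0 ->
  Wof G (T al 0) (T mu y) =
  T (Uf al mu G) (- y * mu^-1 * (Uf al mu G)^-1 * Pf (al ^+ 2) (mu ^+ 2) G).
Proof.
move=> a0 m0; elim: G => [|g G IH].
  by rewrite /Wof big_nil /= mulr0 T10.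
rewrite /Wof big_cons -/(Wof G _ _) IH TXz // -(exprz_inv _ 1) expr1z TV // TM.
rewrite mul0r addr0 TM /=.
congr (T _ _).
have u0 := Uf_neq0 G a0 m0.
have g0 : al ^ g != 0 by rewrite expfz_neq0.
rewrite (_ : (al ^+ 2) ^ g = al ^ g * al ^ g); last first.
  by rewrite exprnP exprzAC -(exprnP (al ^ g) 2) expr2.
rewrite invfM invfM invrK.
field.
by rewrite u0 g0 m0.
Qed.

Definition sumz (G : seq int) : int := foldr +%R 0 G.

Lemma exprzN1 (x : CC) : x ^ (-1) = x^-1.
Proof. by rewrite -(exprz_inv _ 1) expr1z. Qed.

Lemma Uf_eq al mu G : al != 0 -> mu != 0 ->
  Uf al mu G = al ^ (sumz G) * mu ^ (- (size G)%:Z).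
Proof.
move=> a0 m0; elim: G => [|g G IH] //=.
  by rewrite expr0z mul1r oppr0 expr0z.
rewrite IH exprzDr ?unitfE // intS opprD exprzDr ?unitfE // exprzN1.
ring.
Qed.

Lemma Pf11 G : Pf 1 1 G = (size G)%:R.
Proof.
elim: G => [|g G IH] //=; rewrite IH exp1rz invr1 !mul1r.
by rewrite -natr1 addrC.
Qed.

Lemma Pf_cat r s G1 G2 : r != 0 -> s != 0 ->
  Pf r s (G1 ++ G2) = Pf r s G1 + r ^ (sumz G1) * s ^ (- (size G1)%:Z) * Pf r s G2.
Proof.
move=> r0 s0; elim: G1 => [|g G IH] /=.
  by rewrite expr0z oppr0 expr0z !mul1r add0r.
rewrite IH exprzDr ?unitfE // intS opprD exprzDr ?unitfE // exprzN1.
ring.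
Qed.

Fixpoint Qf (r : CC) (G : seq int) : {poly CC} :=
  match G with
  | [::] => 0
  | g :: G' => r ^ g *: ('X^(size G') + Qf r G')
  end.

Lemma size_Qf r G : (size (Qf r G) <= size G)%N.
Proof.
elim: G => [|g G IH] /=; first by rewrite size_poly0.
apply: (leq_trans (size_scale_leq _ _)).
apply: (leq_trans (size_polyD _ _)).
by rewrite size_polyXn geq_max leqnn (leq_trans IH).
Qed.

Lemma Qf_eval r s G : s != 0 ->
  (Qf r G).[s] * s = s ^+ (size G) * Pf r s G.
Proof.
move=> s0; elim: G => [|g G IH] /=; first by rewrite horner0 mul0r mulr0.
rewrite hornerZ hornerD hornerXn -mulrA mulrDl IH exprS.
field.
by [].
Qed.

Lemma Qf_step r (c : int) G1 G2 : r != 0 -> size G1 = size G2 ->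
  Qf r G1 = r ^ c *: Qf r G2 ->
  (G1 = [::] /\ G2 = [::]) \/
  exists g1 g2 H1 H2, [/\ G1 = g1 :: H1, G2 = g2 :: H2, r ^ g1 = r ^ c * r ^ g2
                        & Qf r H1 = Qf r H2].
Proof.
move=> r0; case: G1 => [|g1 H1]; case: G2 => [|g2 H2] //=; first by left.
move=> [eS] eQ; right; exists g1, g2, H1, H2; split => //.
  move: (congr1 (fun p : {poly CC} => p`_(size H1)) eQ).
  rewrite !coefZ !coefD eS coefXn eqxx.
  rewrite !nth_default ?size_Qf -?eS ?size_Qf //.
  by rewrite !addr0 !mulr1.
have e1 : r ^ g1 = r ^ c * r ^ g2.
  move: (congr1 (fun p : {poly CC} => p`_(size H1)) eQ).
  rewrite !coefZ !coefD eS coefXn eqxx.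
  rewrite !nth_default ?size_Qf -?eS ?size_Qf //.
  by rewrite !addr0 !mulr1.
move: eQ; rewrite scalerA -e1 eS => /scalerI; rewrite expfz_eq0 negb_and r0 orbT.
by move=> /(_ isT) /addrI.
Qed.


Lemma powz_inj (r : CC) (a b : int) : 0 < r -> r != 1 -> r ^ a = r ^ b -> a = b.
Proof.
move=> rp r1 e; have r0 : r != 0 by rewrite lt0r_neq0.
have : r ^ (a - b) == 1 by rewrite expfzDr // e -invr_expz divff ?expfz_neq0.
rewrite pexprz_eq1; last exact: ltW.
case/orP => [/eqP/subr0_eq //| /eqP h]; by rewrite h eqxx in r1.
Qed.

Lemma Qf_inj r : 0 < r -> r != 1 -> forall G1 G2, size G1 = size G2 ->
  Qf r G1 = Qf r G2 -> G1 = G2.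
Proof.
move=> rp r1; have r0 : r != 0 by rewrite lt0r_neq0.
elim=> [|g1 H1 IH] G2 eS eQ.
  by case: G2 eS eQ.
have := @Qf_step r 0 (g1 :: H1) G2 r0 eS; rewrite expr0z scale1r => /(_ eQ).
case=> [[//]|[a1 [a2 [K1 [K2 [e1 e2 eK eQ']]]]]].
case: e1 => ??; subst.
rewrite mul1r in eK; rewrite (powz_inj rp r1 eK).
move: eS => /= -[eS].
by rewrite (IH K2).
Qed.

Lemma Qf_half r (h : int) G1 G2 : 0 < r -> r != 1 -> size G1 = size G2 ->
  Qf r G1 = r ^ (sumz G1 - h) *: Qf r G2 -> sumz G1 + sumz G2 = h + h ->
  G1 = G2.
Proof.
move=> rp r1 eS eQ eh; have r0 : r != 0 by rewrite lt0r_neq0.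
have [[-> ->] //|[a1 [a2 [K1 [K2 [e1 e2 eK eQ']]]]]] := Qf_step r0 eS eQ.
subst; move: eS => /= -[eS].
have eK12 := Qf_inj rp r1 eS eQ'; subst.
rewrite -expfzDr // in eK; have := powz_inj rp r1 eK.
move: eh; rewrite /= => eh ea.
have -> : a1 = a2 by lia.
by [].
Qed.

Lemma prim_root_CC (n : nat) : (n > 0)%N -> {z : CC | n.-primitive_root z}.
Proof.
pose p : {poly CC} := 'X^n - 1; have [r Dp] := closed_field_poly_normal p.
move=> n_gt0; apply/sigW; rewrite (monicP _) ?monicXnsubC // scale1r in Dp.
have rn1: all n.-unity_root r by apply/allP=> z; rewrite -root_prod_XsubC -Dp.
have sz_r: (n < (size r).+1)%N.
  by rewrite -(size_prod_XsubC r id) -Dp size_XnsubC.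
have [|z] := hasP (has_prim_root n_gt0 rn1 _ sz_r); last by exists z.
by rewrite -separable_prod_XsubC -Dp separable_Xn_sub_1 // pnatr_eq0 -lt0n.
Qed.

Lemma sumz_cat G1 G2 : sumz (G1 ++ G2) = sumz G1 + sumz G2.
Proof. by elim: G1 => [|g G IH] /=; rewrite ?add0r // IH addrA. Qed.

Lemma sq_powz (al : CC) (g : int) : (al ^+ 2) ^ g = al ^ g * al ^ g.
Proof. by rewrite exprnP exprzAC -(exprnP (al ^ g) 2) expr2. Qed.

Lemma K_even G (n : nat) (h : int) : (0 < n)%N -> size G = (n + n)%N ->
  sumz G = h + h -> ~ (exists G1, G = G1 ++ G1) ->
  exists al mu, [/\ al != 0, mu != 0, Uf al mu G = -1 &
                    Pf (al ^+ 2) (mu ^+ 2) G != 0].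
Proof.
move=> n0 sG sumG nsq.
pose al : CC := 2%:R.
have al0 : al != 0 by rewrite pnatr_eq0.
pose r := al ^+ 2.
have rp : 0 < r by rewrite /r /al -natrX ltr0n.
have r1 : r != 1 by rewrite /r /al -natrX pnatr_eq1.
have r0 : r != 0 by rewrite lt0r_neq0.
pose G1 := take n G; pose G2 := drop n G.
have eG : G = G1 ++ G2 by rewrite cat_take_drop.
have s1 : size G1 = n by rewrite size_take sG; case: ifP => //; lia.
have s2 : size G2 = n by rewrite size_drop sG; lia.
pose D := Qf r G1 - r ^ (sumz G1 - h) *: Qf r G2.
have [D0|Dn0] := eqVneq D 0.
  exfalso; apply: nsq; exists G1.
  have e12 : G1 = G2.
    apply: (Qf_half (h := h) rp r1); first by rewrite s1 s2.
      by apply/eqP; rewrite -subr_eq0 -/D D0.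
    by rewrite -sumz_cat -eG.
  by rewrite {1}eG -e12.
have [z zP] := prim_root_CC n0.
pose c : CC := - (r ^ h).
have c0 : c != 0 by rewrite oppr_eq0 expfz_neq0.
pose c1 := n.-root c.
have c10 : c1 != 0 by rewrite rootC_eq0.
pose rs := [seq c1 * z ^+ i | i <- iota 0 n].
have urs : uniq rs.
  rewrite map_inj_in_uniq ?iota_uniq // => i j; rewrite !mem_iota !add0n => ilt jlt.
  move/(mulfI c10)/eqP; rewrite (eq_prim_root_expr zP) !modn_small // => /eqP //.
have srs : size rs = n by rewrite size_map size_iota.
have rsn : forall s, s \in rs -> s ^+ n = c.
  move=> s /mapP [i _ ->]; rewrite exprMn rootCK // -exprM mulnC exprM.
  by rewrite (prim_expr_order zP) expr1n mulr1.
have [allr|] := boolP (all (root D) rs).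
  have sD : (size D <= n)%N.
    apply: (leq_trans (size_polyD _ _)); rewrite size_polyN geq_max.
    apply/andP; split; first by rewrite -[X in (_ <= X)%N]s1 size_Qf.
    apply: (leq_trans (size_scale_leq _ _)).
    by rewrite -[X in (_ <= X)%N]s2 size_Qf.
  have := max_poly_roots Dn0 allr urs; rewrite srs => H; exfalso.
  by have := leq_trans H sD; rewrite ltnn.
case/allPn => s srs' nroot.
have sn := rsn s srs'.
have s0 : s != 0.
  by apply/eqP => s0; move: c0; rewrite -sn s0 expr0n eqn0Ngt n0 /= eqxx.
pose mu := 2.-root s.
have mu2 : mu ^+ 2 = s by rewrite rootCK.
have mu0 : mu != 0 by rewrite rootC_eq0.
exists al, mu; split => //.
  rewrite Uf_eq // sumG sG expfzDr // -sq_powz -/r.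
  rewrite -invr_expz -exprnP addnn -mul2n exprM mu2 sn /c.
  by field; rewrite expfz_neq0.
rewrite mu2 -/r eG Pf_cat // s1.
have esn : s ^ (- n%:Z) = c^-1 by rewrite -invr_expz -exprnP sn.
rewrite esn; apply: contra nroot => /eqP P0.
have := Qf_eval r G1 s0; have := Qf_eval r G2 s0; rewrite s1 s2 => e2 e1.
rewrite /root /D hornerD hornerN hornerZ.
rewrite -(mulIr_eq0 _ (mulIf s0)) mulrDl mulNr -mulrA e1 e2.
rewrite (_ : r ^ (sumz G1 - h) = r ^ sumz G1 * (r ^ h)^-1); last first.
  by rewrite expfzDr // invr_expz.
rewrite sn; apply/eqP; rewrite -[RHS](mulr0 c) -P0 /c.
by field; rewrite expfz_neq0.
Qed.


Lemma int_parity (A : int) : exists h : int, A = h + h \/ A = h + h + 1.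
Proof.
exists (A %/ 2)%Z; have e := divz_eq A 2.
have g0 : 0 <= (A %% 2)%Z by rewrite modz_ge0.
have l2 : (A %% 2)%Z < 2 by rewrite ltz_pmod.
lia.
Qed.

Lemma m1z_even (h : int) : (-1 : CC) ^ (h + h) = 1.
Proof.
rewrite -mulr2z -mulrzr -exprz_exp exprzAC intz.
by rewrite -(exprnP (-1) 2) expr2 mulrNN mulr1 exp1rz.
Qed.

Lemma K_lemma G (eps : CC) : G != [::] -> (eps = 1 \/ eps = -1) ->
  (eps = -1 -> ~ (exists G1, G = G1 ++ G1)) ->
  exists al mu, [/\ al != 0, mu != 0, Uf al mu G = eps &
                    Pf (al ^+ 2) (mu ^+ 2) G != 0].
Proof.
move=> Gn0 heps nsq.
have N0 : (size G)%:R != 0 :> CC by rewrite pnatr_eq0 size_eq0.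
have o0 : (1 : CC) != 0 := oner_neq0 _.
have m0 : (-1 : CC) != 0 by rewrite oppr_eq0.
have sq1 : (-1 : CC) ^+ 2 = 1 by rewrite expr2 mulrNN mulr1.
case: heps => e; subst eps.
  exists 1, 1; split => //; last by rewrite expr1n Pf11.
  by rewrite Uf_eq // !exp1rz mulr1.
have nsq' := nsq erefl.
case oN : (odd (size G)).
  exists 1, (-1); split => //; last by rewrite expr1n sq1 Pf11.
  rewrite Uf_eq // exp1rz mul1r -invr_expz -exprnP -signr_odd oN expr1.
  by rewrite invrN invr1.
have [h [eA|eA]] := int_parity (sumz G); last first.
  exists (-1), 1; split => //; last by rewrite expr1n sq1 Pf11.
  by rewrite Uf_eq // eA exp1rz mulr1 expfzDr // m1z_even mul1r.
have eN : size G = ((size G)./2 + (size G)./2)%N.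
  by rewrite -{1}(odd_double_half (size G)) oN add0n addnn.
have n0 : (0 < (size G)./2)%N.
  move: Gn0 eN; rewrite -size_eq0; case: (size G)./2 => [|//]; by move=> /eqP H; rewrite addn0 => /H.
exact: (K_even n0 eN eA nsq').
Qed.

Definition Img G (M : 'M[CC]_2) :=
  exists X Y, SL2 X /\ SL2 Y /\ Wof G X Y = M.

Lemma SL2_unit X : SL2 X -> X \is a GRing.unit.
Proof. by rewrite /SL2 unitmxE => ->; rewrite unitr1. Qed.

Lemma conj_powz (Q X : 'M[CC]_2) (z : int) : Q \is a GRing.unit ->
  X \is a GRing.unit -> (Q * X * Q^-1) ^ z = Q * X ^ z * Q^-1.
Proof.
move=> uQ uX.
have hn : forall (X : 'M[CC]_2) n, (Q * X * Q^-1) ^+ n = Q * X ^+ n * Q^-1.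
  move=> X' ; elim=> [|n IH]; first by rewrite !expr0 mulr1 divrr.
  by rewrite exprS IH !mulrA divrK // exprS !mulrA.
case: z => n; first by rewrite -!exprnP hn.
rewrite !NegzE -!exprz_inv -!exprnP.
have uA : Q * X * Q^-1 \is a GRing.unit by rewrite unitrMr ?unitrV // unitrMl.
have -> : (Q * X * Q^-1)^-1 = Q * X^-1 * Q^-1.
  apply: (mulrI uA); rewrite divrr //.
  by rewrite !mulrA (divrK uQ (Q * X)) (mulrK uX Q) (divrr uQ).
by rewrite -(hn X^-1).
Qed.


Lemma Wof_conj G Q X Y : Q \is a GRing.unit -> X \is a GRing.unit ->
  Y \is a GRing.unit -> Wof G (Q * X * Q^-1) (Q * Y * Q^-1) = Q * Wof G X Y * Q^-1.
Proof. exact: Wof_conjR. Qed.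

Lemma det_conj (Q X : 'M[CC]_2) : Q \is a GRing.unit -> \det (Q * X * Q^-1) = \det X.
Proof.
move=> uQ; rewrite -!mulmxE !det_mulmx det_inv.
rewrite mulrC mulrA mulVr ?mul1r //.
Qed.

Lemma Img_conj G M Q : Q \is a GRing.unit -> Img G M -> Img G (Q * M * Q^-1).
Proof.
move=> uQ [X [Y [sX [sY e]]]]; exists (Q * X * Q^-1), (Q * Y * Q^-1).
rewrite /SL2 !det_conj //; split => //; split => //.
by rewrite Wof_conj ?(SL2_unit sX) ?(SL2_unit sY) // e.
Qed.

Lemma Img_diag G lam : G != [::] -> lam != 0 -> Img G (T lam 0).
Proof.
move=> Gn l0; have N0 : (0 < size G)%N by rewrite lt0n size_eq0.
pose mu := ((size G).-root lam)^-1.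
have mu0 : mu != 0 by rewrite invr_eq0 rootC_eq0.
exists (T 1 0), (T mu 0); split; first exact: detT (oner_neq0 _).
split; first exact: detT mu0.
rewrite WofT ?oner_neq0 // oppr0 !mul0r; congr (T _ _).
rewrite Uf_eq ?oner_neq0 // exp1rz mul1r /mu exprz_inv opprK -exprnP.
by rewrite rootCK.
Qed.

Lemma Img_pm G lam b : G != [::] -> (lam = 1 \/ lam = -1) ->
  (lam = -1 -> ~ (exists G1, G = G1 ++ G1)) -> Img G (T lam b).
Proof.
move=> Gn hl nsq.
have [al [mu [a0 m0 eU P0]]] := K_lemma Gn hl nsq.
have l0 : lam != 0 by case: hl => ->; rewrite ?oppr_eq0 oner_neq0.
pose y := - b * mu * lam / Pf (al ^+ 2) (mu ^+ 2) G.
exists (T al 0), (T mu y); split; first exact: detT a0.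
split; first exact: detT m0.
rewrite WofT // eU; congr (T _ _); rewrite /y.
by field; rewrite P0 m0 l0.
Qed.

Lemma sqrf_eq1' (x : CC) : (x ^+ 2 == 1) = (x == 1) || (x == -1).
Proof. by rewrite sqrf_eq1. Qed.

Lemma Img_T G lam b : G != [::] -> ~ (exists G1, G = G1 ++ G1) -> lam != 0 ->
  Img G (T lam b).
Proof.
move=> Gn nsq l0.
case: (boolP (lam ^+ 2 == 1)) => [|h2].
  rewrite sqrf_eq1' => /orP [/eqP|/eqP] e; apply: Img_pm => //; by [left|right].
have d0 : lam^-1 - lam != 0.
  apply: contra h2; rewrite subr_eq0 => /eqP e.
  by rewrite expr2 -{1}e mulVf.
pose z := b / (lam^-1 - lam).
have uQ := T_unit z (oner_neq0 CC).
have -> : T lam b = T 1 z * T lam 0 * (T 1 z)^-1.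
  rewrite TV ?oner_neq0 // !TM; congr (T _ _); first by rewrite mul1r invr1 mulr1.
  rewrite /z; field; rewrite l0 /=; apply: contra h2 => /eqP e; apply/eqP; rewrite expr2; apply/eqP; rewrite -subr_eq0 -oppr_eq0 opprB; apply/eqP; rewrite -e; ring.
exact: (Img_conj uQ (Img_diag Gn l0)).
Qed.

Lemma triang (M : 'M[CC]_2) : SL2 M ->
  exists Q lam b, [/\ Q \is a GRing.unit, lam != 0 & M = Q * T lam b * Q^-1].
Proof.
rewrite /SL2 det2 => dM.
set p := M 0 0 in dM *; set q := M 0 1 in dM *; set r := M 1 0 in dM *;
set s := M 1 1 in dM *.
have hq : q * r = p * s - 1 by rewrite -dM; ring.
have [r0|rn0] := eqVneq r 0.
  have p0 : p != 0 by apply: contra_eq_neq dM => ->; rewrite r0 !mulr0 mul0r subr0 eq_sym oner_neq0.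
  have ps : p * s = 1 by rewrite -dM r0 mulr0 subr0.
  have hs : s = p^-1 by rewrite -[s](mulKf p0) ps mulr1.
  exists 1, p, q; split => //; first exact: unitr1.
  rewrite mul1r invr1 mulr1; apply/matrixP => i j; rewrite !mxE.
  case: i => [[|[|//]] ?]; case: j => [[|[|//]] ?] //=.
  - by rewrite /p; congr (M _ _); exact: val_inj.
  - by rewrite /q; congr (M _ _); exact: val_inj.
  - by rewrite -r0 /r; congr (M _ _); exact: val_inj.
  - by rewrite -hs /s; congr (M _ _); exact: val_inj.
pose t := p + s.
pose d := sqrtC (t ^+ 2 - 4%:R).
pose lam := (t + d) / 2%:R.
have two0 : (2%:R : CC) != 0 by rewrite pnatr_eq0.
have hl : lam * (t - lam) = 1.
  have -> : lam * (t - lam) = (t ^+ 2 - d ^+ 2) / 4%:R.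
    by rewrite /lam; field.
  by rewrite /d sqrtCK; field.
have l0 : lam != 0 by apply: contra_eq_neq hl => ->; rewrite mul0r eq_sym oner_neq0.
have hi : lam^-1 = t - lam by rewrite -[t - lam](mulKf l0) hl mulr1.
pose Q : 'M[CC]_2 := \matrix_(i, j) (if i == 0 :> nat then (if j == 0 :> nat then lam - s else 1)
                  else (if j == 0 :> nat then r else 0)).
have dQ : \det Q = - r by rewrite det2 !mxE /=; ring.
have uQ : Q \is a GRing.unit by rewrite unitmxE dQ unitfE oppr_eq0.
exists Q, lam, 1; split => //.
have e : M * Q = Q * T lam 1.
  apply/matrixP => i j; rewrite -!mulmxE !mxE !big_ord_recl !big_ord0 !mxE /=.
  have e00 : M 0 0 = p by []. have e01 : M 0 1 = q by [].
  have e10 : M 1 0 = r by []. have e11 : M 1 1 = s by [].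
  case: i => [[|[|//]] ?]; case: j => [[|[|//]] ?] /=.
  - rewrite (_ : M (Ordinal _) ord0 = p); last by congr (M _ _); exact: val_inj.
    rewrite (_ : M (Ordinal _) (lift ord0 ord0) = q); last by congr (M _ _); exact: val_inj.
    apply/eqP; rewrite -subr_eq0; apply/eqP.
    transitivity ((q * r - (p * s - 1)) + (lam * (t - lam) - 1)); first by rewrite /t; ring.
    by rewrite hq hl !subrr addr0.
  - rewrite (_ : M (Ordinal _) ord0 = p); last by congr (M _ _); exact: val_inj.
    rewrite (_ : M (Ordinal _) (lift ord0 ord0) = q); last by congr (M _ _); exact: val_inj.
    by rewrite hi /t; ring.
  - rewrite (_ : M (Ordinal _) ord0 = r); last by congr (M _ _); exact: val_inj.
    rewrite (_ : M (Ordinal _) (lift ord0 ord0) = s); last by congr (M _ _); exact: val_inj.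
    ring.
  - rewrite (_ : M (Ordinal _) ord0 = r); last by congr (M _ _); exact: val_inj.
    rewrite (_ : M (Ordinal _) (lift ord0 ord0) = s); last by congr (M _ _); exact: val_inj.
    ring.
by rewrite -e mulrK.
Qed.

Definition yb : letter := (true, true).
Definition Lof (G : seq int) : seq letter :=
  flatten [seq gen_pow false g ++ [:: yb] | g <- G].
Definition chunk (ai bi : int) : seq int := ai :: nseq (`|bi|.-1) 0.
Definition Gof k (a b : 'I_k -> int) : seq int :=
  flatten [seq chunk (a i) (b i) | i <- enum 'I_k].

Lemma Lof_cat G1 G2 : Lof (G1 ++ G2) = Lof G1 ++ Lof G2.
Proof. by rewrite /Lof map_cat flatten_cat. Qed.

Lemma Wof_cat G1 G2 X Y : Wof (G1 ++ G2) X Y = Wof G1 X Y * Wof G2 X Y.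
Proof. by rewrite /Wof big_cat. Qed.

Lemma Lof_flat (I : Type) (f : I -> seq int) s :
  Lof (flatten (map f s)) = flatten [seq Lof (f i) | i <- s].
Proof. by elim: s => [|i s IH] //=; rewrite Lof_cat IH. Qed.

Lemma Wof_flat (I : Type) (f : I -> seq int) s X Y :
  Wof (flatten (map f s)) X Y = \prod_(i <- s) Wof (f i) X Y.
Proof.
elim: s => [|i s IH] /=; first by rewrite /Wof !big_nil.
by rewrite Wof_cat IH big_cons.
Qed.

Lemma Lof_nseq m : Lof (nseq m 0) = nseq m yb.
Proof.
elim: m => [|m IH] //.
by rewrite -[nseq m.+1 0]/([:: 0] ++ nseq m 0) Lof_cat IH.
Qed.

Lemma Wof_nseq m X Y : Wof (nseq m 0) X Y = (Y^-1) ^+ m.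
Proof.
elim: m => [|m IH]; first by rewrite /Wof big_nil expr0.
by rewrite /Wof /= big_cons -/(Wof _ _ _) IH expr0z mul1r exprS.
Qed.

Lemma Lof_chunk (ai bi : int) : bi < 0 -> Lof (chunk ai bi) = gen_pow false ai ++ gen_pow true bi.
Proof.
case: bi => // m _; rewrite /chunk -[_ :: _]/([:: ai] ++ _) Lof_cat Lof_nseq.
by rewrite /Lof /= cats0 -catA.
Qed.

Lemma Wof_chunk (ai bi : int) X Y : bi < 0 -> Wof (chunk ai bi) X Y = X ^ ai * Y ^ bi.
Proof.
case: bi => // m _; rewrite /chunk /Wof /= big_cons -/(Wof _ _ _) Wof_nseq.
rewrite -mulrA; congr (_ * _).
have -> : Y ^ (-1) = Y^-1 by [].
by rewrite -exprS exprVn.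
Qed.

Lemma word_of_eq k (a b : 'I_k -> int) : (forall i, b i < 0) ->
  word_of a b = Lof (Gof a b).
Proof.
move=> hb; rewrite /Gof Lof_flat /word_of; congr flatten.
by apply: eq_map => i; rewrite Lof_chunk.
Qed.

Lemma word_map_eq k (a b : 'I_k -> int) X Y : (forall i, b i < 0) ->
  word_map a b X Y = Wof (Gof a b) X Y.
Proof.
move=> hb; rewrite /Gof Wof_flat /word_map enumT.
by apply: eq_bigr => i _; rewrite Wof_chunk.
Qed.

Definition lval (l : letter) : int := if l.1 then (if l.2 then -1 else 1) else 0.
Definition ysum (s : seq letter) : int := foldr (fun l z => lval l + z) 0 s.

Lemma ysum_push l s : ysum (push l s) = ysum (l :: s).
Proof.
case: s => [|l' s'] //=.
case: ifP => // /andP [/eqP e1 e2].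
move: e1 e2; case: l => [b1 b2]; case: l' => [c1 c2] /= -> {c1}.
rewrite /lval /=; case: b1; case: b2; case: c2 => //= _; lia.
Qed.

Lemma ysum_reduce s : ysum (reduce s) = ysum s.
Proof. by elim: s => [|l s IH] //=; rewrite ysum_push /= IH. Qed.

Lemma ysum_cat s1 s2 : ysum (s1 ++ s2) = ysum s1 + ysum s2.
Proof. by elim: s1 => [|l s IH] /=; rewrite ?add0r // IH addrA. Qed.

Lemma ysum_genx g : ysum (gen_pow false g) = 0.
Proof. by rewrite /gen_pow; elim: `|g|%N => [|m IH] //=; rewrite IH. Qed.

Lemma ysum_Lof G : ysum (Lof G) = - (size G)%:Z.
Proof.
elim: G => [|g G IH] //=.
rewrite -[g :: G]/([:: g] ++ G) Lof_cat ysum_cat IH /Lof /= cats0 ysum_cat ysum_genx.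
rewrite /= /lval /=; lia.
Qed.

Lemma Gof_nil k (a b : 'I_k -> int) : (1 <= k)%N -> Gof a b != [::].
Proof.
move=> hk; rewrite /Gof; case e : (enum 'I_k) => [|i s] //.
have := size_enum_ord k; rewrite e /= => k0.
by move: hk; rewrite -k0.
Qed.

Theorem corollary7p5 (k : nat) (a b : 'I_k -> int)
  (hk : (1 <= k)%N)
  (ha : forall i, a i != 0) (hb : forall i, b i != 0)
  (hneg : forall i, b i < 0) :
  (forall M : 'M[CC]_2, SL2 M ->
     exists X Y : 'M[CC]_2, SL2 X /\ SL2 Y /\ word_map a b X Y = M)
  \/
  (exists v : seq letter, ~ F2eq v [::] /\ F2eq (word_of a b) (v ++ v)).
Proof.
have Gn := Gof_nil a b hk.
set G := Gof a b in Gn.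
case: (classic (exists G1, G = G1 ++ G1)) => [[G1 eG]|nsq].
  right; exists (Lof G1); split; last first.
    by rewrite /F2eq word_of_eq // -/G eG Lof_cat.
  rewrite /F2eq /= => e.
  have := ysum_reduce (Lof G1); rewrite e ysum_Lof /= => /eqP.
  rewrite eq_sym oppr_eq0 => /eqP H.
  have G10 : G1 = [::] by apply/eqP; rewrite -size_eq0; apply/eqP; case: H.
  by move: Gn; rewrite eG G10.
left => M sM.
have [Q [lam [bb [uQ l0 ->]]]] := triang sM.
have [X [Y [sX [sY e]]]] := Img_conj uQ (@Img_T G lam bb Gn nsq l0).
by exists X, Y; rewrite word_map_eq.
Qed.
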